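(* Let $S$ be an intra-regular $\Gamma$-AG$^{**}$-groupoid. Then every right $\Gamma$-ideal, every left $\Gamma$-ideal, and every two-sided $\Gamma$-ideal of $S$ is $\Gamma$-semiprime.
   Context: Let $S$ and $\Gamma$ be nonempty sets with a map $S\times\Gamma\times S\to S$, $(x,\gamma,y)\mapsto x\gamma y$. $S$ is a $\Gamma$-AG-groupoid if $(x\gamma y)\delta z=(z\gamma y)\delta x$ for all $x,y,z\in S$, $\gamma,\delta\in\Gamma$; it is a $\Gamma$-AG$^{**}$-groupoid if moreover $a\alpha(b\beta c)=b\alpha(a\beta c)$ for all $a,b,c\in S$, $\alpha,\beta\in\Gamma$. For subsets $A,B\subseteq S$, $A\Gamma B=\{a\gamma b: a\in A,\gamma\in\Gamma,b\in B\}$. $S$ is intra-regular if for every $a\in S$ there exist $x,y\in S$ and $\beta,\gamma,\delta\in\Gamma$ with $a=(x\beta(a\delta a))\gamma y$. A nonempty subset $A$ is a left (right) $\Gamma$-ideal if $S\Gamma A\subseteq A$ ($A\Gamma S\subseteq A$), two-sided if both. A subset $P\subseteq S$ is $\Gamma$-semiprime if for every $a\in S$, $a\Gamma a\subseteq P$ implies $a\in P$. *)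

(* Defs.v *)
Set Implicit Arguments.

Section Gamma.
Variables (S G : Type) (op : S -> G -> S -> S).

Definition is_GammaAG : Prop :=
  forall (x y z : S) (g d : G), op (op x g y) d z = op (op z g y) d x.

Definition is_GammaAGss : Prop :=
  is_GammaAG /\
  forall (a b c : S) (al be : G), op a al (op b be c) = op b al (op a be c).

Definition intra_regular : Prop :=
  forall a : S, exists (x y : S) (be ga de : G),
    a = op (op x be (op a de a)) ga y.

Definition left_Gamma_ideal (A : S -> Prop) : Prop :=
  (exists a, A a) /\ forall (s : S) (g : G) (a : S), A a -> A (op s g a).

Definition right_Gamma_ideal (A : S -> Prop) : Prop :=
  (exists a, A a) /\ forall (a : S) (g : G) (s : S), A a -> A (op a g s).

Definition two_sided_Gamma_ideal (A : S -> Prop) : Prop :=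
  left_Gamma_ideal A /\ right_Gamma_ideal A.

Definition Gamma_semiprime (P : S -> Prop) : Prop :=
  forall a : S, (forall g : G, P (op a g a)) -> P a.

End Gamma.

(* Main.v *)
Require Import Defs.
From Stdlib Require Import Setoid.

Theorem mainTheorem14 (S G : Type) (op : S -> G -> S -> S)
  (HS : is_GammaAGss op) (HG : inhabited G) (Hne : inhabited S)
  (Hir : intra_regular op) :
  (forall A : S -> Prop, right_Gamma_ideal op A -> Gamma_semiprime op A) /\
  (forall A : S -> Prop, left_Gamma_ideal op A -> Gamma_semiprime op A) /\
  (forall A : S -> Prop, two_sided_Gamma_ideal op A -> Gamma_semiprime op A).
Proof.
  destruct HS as [LI AG].
  unfold is_GammaAG in LI.
  assert (MED : forall x y z w g d e, op (op x g y) d (op z e w) = op (op x g z) d (op y e w)).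
  { intros. rewrite LI. rewrite (LI z). rewrite LI. reflexivity. }
  assert (L : forall A, left_Gamma_ideal op A -> Gamma_semiprime op A).
  { intros A [_ HA] a Ha.
    destruct (Hir a) as (x & y & be & ga & de & E).
    set (N := op a de a) in *.
    set (k := op y be N).
    assert (Ek : a = op k ga x) by (unfold k; rewrite <- LI; exact E).
    assert (EN : N = op (op a ga x) de k) by (unfold N; rewrite Ek at 1; rewrite LI; reflexivity).
    set (q := op x de k).
    assert (E2 : a = op (op (op q ga x) be a) ga y).
    { assert (H1 : op x be N = op (op q ga x) be a).
      { rewrite EN. rewrite AG. fold q. apply LI. }
      rewrite <- H1. exact E. }
    assert (E3 : a = op (op y be (op x ga x)) ga (op q ga k)).
    { assert (H1 : op (op q ga x) be a = op (op q ga k) be (op x ga x)).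
      { rewrite Ek at 1. apply MED. }
      rewrite E2 at 1. rewrite H1. apply LI. }
    rewrite E3. apply HA. apply HA. unfold k. apply HA. unfold N. apply Ha. }
  split; [|split].
  - intros A [_ HA] a Ha.
    destruct (Hir a) as (x & y & be & ga & de & E).
    assert (E2 : a = op (op (op (op a de a) ga y) be (op x be (op x de a))) ga y).
    { set (N := op a de a) in *. set (p := op x be N) in *.
      assert (H1 : op x be N = op a be (op x de a)) by (unfold N; apply AG).
      assert (H2 : op (op p ga y) be (op x de a) = op (op (op x de a) ga y) be p) by apply LI.
      assert (H3 : op (op (op x de a) ga y) be p = op x be (op (op (op x de a) ga y) be N)) by (unfold p; apply AG).
      assert (H4 : op (op (op x de a) ga y) be N = op (op N ga y) be (op x de a)) by (unfold N; apply LI).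
      assert (H5 : op x be (op (op N ga y) be (op x de a)) = op (op N ga y) be (op x be (op x de a))) by apply AG.
      rewrite <- H5, <- H4, <- H3, <- H2. rewrite <- E. fold p. rewrite <- H1. exact E. }
    rewrite E2. apply HA. apply HA. apply HA. apply Ha.
  - exact L.
  - intros A [H1 _]. apply L; exact H1.
Qed.
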